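(* Consider the problem $\min f(x)$ subject to $x\in\mathcal{F}\cap\mathcal{Z}\cap X$, where $\mathcal{F}=\{x: g(x)\le0\}$, and suppose the extended Mangasarian–Fromovitz condition (EMFCQ, see context) holds. Then there is $\varepsilon^\star>0$ such that for every $\varepsilon\in(0,\varepsilon^\star]$ the penalty function $P(x;\varepsilon)=f(x)+\frac1\varepsilon\sum_{i=1}^m\max\{0,g_i(x)\}$ has no Clarke stationary points (for the problem $\min\{P(x;\varepsilon): x\in X\cap\mathcal{Z}\}$) in $(X\cap\mathcal{Z})\setminus\mathcal{F}$.
   Context: $\{1,\dots,n\}=I^c\cup I^z$, $I^c\cap I^z=\emptyset$; $v_c=(v_i)_{i\in I^c}$, $v_z=(v_i)_{i\in I^z}$. $l,u\in\mathbb{R}^n$ finite, $l_i<u_i$, $l_i,u_i\in\mathbb{Z}$ for $i\in I^z$; $X=\{x:l\le x\le u\}$, $\mathcal{Z}=\{x: x_i\in\mathbb{Z}\ \forall i\in I^z\}$. $f:\mathbb{R}^n\to\mathbb{R}$ and $g=(g_1,\dots,g_m):\mathbb{R}^n\to\mathbb{R}^m$ are Lipschitz continuous w.r.t. the continuous variables: there is $L>0$ with $|h(x)-h(y)|\le L\|x-y\|$ for $h\in\{f,g_1,\dots,g_m\}$ whenever $x_z=y_z$. A vector in $\mathbb{Z}^p$ is primitive if the gcd of its components is 1. For $x\in X\cap\mathcal{Z}$: $D^z(x)=\{d\in\mathbb{Z}^n: d_i=0\ (i\in I^c),\ d_z\text{ primitive},\ x+d\in X\cap\mathcal{Z}\}$,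 $\mathcal{B}^z(x)=\{x+d: d\in D^z(x)\}$, $D^c(x)=\{s: s_i=0\ (i\in I^z),\ s_i\ge0 \text{ if } i\in I^c,x_i=l_i,\ s_i\le0\text{ if } i\in I^c,x_i=u_i\}$. For $h$ Lipschitz w.r.t. continuous variables and $s$ with $s_z=0$: $h^{Cl}_{x_c}(x;s)=\limsup_{y_c\to x_c,\,y_z=x_z,\,t\downarrow0}\frac{h(y+ts)-h(y)}{t}$, and $\partial_c h(x)=\{v\in\mathbb{R}^n: v_z=0,\ h^{Cl}_{x_c}(x;s)\ge s^\top v\ \forall s \text{ with } s_z=0\}$. A point $x\in X\cap\mathcal{Z}$ is a Clarke stationary point of $\min\{P(\cdot;\varepsilon):X\cap\mathcal{Z}\}$ if $P^{Cl}_{x_c}(x;s)\ge0$ for all $s\in D^c(x)$ and $P(x;\varepsilon)\le P(y;\varepsilon)$ for all $y\in\mathcal{B}^z(x)$. EMFCQ: for every $x\in(X\cap\mathcal{Z})\setminus\operatorname{int}\mathcal{F}$, either (i) there is $s\in D^c(x)$ with $\xi^\top s<0$ for all $\xi\in\partial_c g_i(x)$ and all $i$ with $g_i(x)\ge0$; or (ii) there is $\bar d\in D^z(x)$ with $\sum_{i=1}^m\max\{0,g_i(x+\bar d)\}<\sum_{i=1}^m\max\{0,g_i(x)\}$. *)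

(* Defs.v *)
From HB Require Import structures.
From mathcomp Require Import all_boot all_order all_algebra.
From mathcomp Require Import classical_sets reals constructive_ereal ereal.
Set Implicit Arguments. Unset Strict Implicit. Unset Printing Implicit Defensive.
Import Order.TTheory GRing.Theory Num.Theory.
Local Open Scope ring_scope.
Local Open Scope classical_set_scope.

Section Defs.
Variables (R : realType) (n : nat).
Notation vec := ('I_n -> R).

Definition enorm (x : vec) : R := Num.sqrt (\sum_(i < n) x i ^+ 2).
Definition dotp (s v : vec) : R := \sum_(i < n) s i * v i.
Definition vadd (x y : vec) : vec := fun i => x i + y i.
Definition vsub (x y : vec) : vec := fun i => x i - y i.
Definition vscale (t : R) (s : vec) : vec := fun i => t * s i.

(* Iz : the set I^z of integer variables; I^c is its complement *)
Variable Iz : {set 'I_n}.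

Definition same_z (x y : vec) : Prop := forall i, i \in Iz -> x i = y i.
Definition zero_z (s : vec) : Prop := forall i, i \in Iz -> s i = 0.

Definition is_intR (r : R) : Prop := exists k : int, r = k%:~R.

Definition inX (l u : vec) (x : vec) : Prop := forall i, l i <= x i <= u i.
Definition inZ (x : vec) : Prop := forall i, i \in Iz -> is_intR (x i).

Definition inDz (l u : vec) (x : vec) (d : 'I_n -> int) : Prop :=
  (forall i, i \notin Iz -> d i = 0%R) /\
  (\big[gcdz/0%R]_(i in Iz) d i = 1%R) /\
  inX l u (fun i => x i + (d i)%:~R) /\ inZ (fun i => x i + (d i)%:~R).

Definition inBz (l u : vec) (x y : vec) : Prop :=
  exists d, inDz l u x d /\ y = (fun i => x i + (d i)%:~R).

Definition inDc (l u : vec) (x s : vec) : Prop :=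
  zero_z s /\
  (forall i, i \notin Iz -> x i = l i -> 0 <= s i) /\
  (forall i, i \notin Iz -> x i = u i -> s i <= 0).

(* Clarke generalized directional derivative w.r.t. the continuous variables:
   limsup_{y_c -> x_c, y_z = x_z, t downarrow 0} (h(y + t s) - h(y)) / t,
   written out as inf_{delta>0} sup {... : |y - x| < delta, y_z = x_z, 0 < t < delta}. *)
Definition clarke_dd (h : vec -> R) (x s : vec) : \bar R :=
  ereal_inf [set ereal_sup
     [set r : \bar R | exists (y : vec) (t : R),
        same_z y x /\ enorm (vsub y x) < delta /\ 0 < t < delta /\
        r = ((h (vadd y (vscale t s)) - h y) / t)%:E]
   | delta in [set d : R | 0 < d]].

Definition in_clarke_subdiff (h : vec -> R) (x v : vec) : Prop :=
  zero_z v /\ forall s, zero_z s -> ((dotp s v)%:E <= clarke_dd h x s)%E.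

Definition lipschitz_c (L : R) (h : vec -> R) : Prop :=
  forall x y, same_z x y -> `|h x - h y| <= L * enorm (vsub x y).

Variable m : nat.

Definition viol (g : 'I_m -> vec -> R) (x : vec) : R :=
  \sum_(i < m) Num.max 0 (g i x).

Definition penalty (f : vec -> R) (g : 'I_m -> vec -> R) (eps : R) (x : vec) : R :=
  f x + eps^-1 * viol g x.

Definition inF (g : 'I_m -> vec -> R) (x : vec) : Prop := forall i, g i x <= 0.
Definition in_intF (g : 'I_m -> vec -> R) (x : vec) : Prop :=
  exists r : R, 0 < r /\ forall y, enorm (vsub y x) < r -> inF g y.

Definition clarke_stationary (l u : vec) (P : vec -> R) (x : vec) : Prop :=
  inX l u x /\ inZ x /\
  (forall s, inDc l u x s -> (0 <= clarke_dd P x s)%E) /\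
  (forall y, inBz l u x y -> P x <= P y).

Definition EMFCQ (l u : vec) (g : 'I_m -> vec -> R) : Prop :=
  forall x, inX l u x -> inZ x -> ~ in_intF g x ->
    (exists s, inDc l u x s /\
       forall i, 0 <= g i x -> forall xi, in_clarke_subdiff (g i) x xi ->
         dotp xi s < 0)
    \/ (exists d, inDz l u x d /\ viol g (fun i => x i + (d i)%:~R) < viol g x).

End Defs.

(* Main.v *)
Require Import Defs.
From HB Require Import structures.
From mathcomp Require Import all_boot all_order all_algebra.
From mathcomp Require Import classical_sets reals constructive_ereal ereal.
From mathcomp Require Import boolp.
From mathcomp Require Import ring lra zify.
Set Implicit Arguments. Unset Strict Implicit. Unset Printing Implicit Defensive.
Import Order.TTheory GRing.Theory Num.Theory.
Local Open Scope ring_scope.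


Section Enorm.
Variables (R : realType) (n : nat).
Notation vec := ('I_n -> R).

Lemma sumsq_ge0 (x : vec) : 0 <= \sum_(i < n) x i ^+ 2.
Proof. by apply: sumr_ge0 => i _; rewrite sqr_ge0. Qed.

Lemma enorm_ge0 (x : vec) : 0 <= enorm x.
Proof. exact: sqrtr_ge0. Qed.

Lemma enorm_sqr (x : vec) : enorm x ^+ 2 = \sum_(i < n) x i ^+ 2.
Proof. by rewrite /enorm sqr_sqrtr // sumsq_ge0. Qed.

Lemma sqrt_le_of (a b : R) : 0 <= b -> a <= b ^+ 2 -> Num.sqrt a <= b.
Proof.
move=> hb hab; have := ler_wsqrtr hab; rewrite sqrtr_sqr ger0_norm //.
Qed.

Lemma coord_le_enorm (x : vec) i : `|x i| <= enorm x.
Proof.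
have h1 : x i ^+ 2 <= \sum_(j < n) x j ^+ 2.
  rewrite (bigD1 i) //= lerDl; apply: sumr_ge0 => j _; exact: sqr_ge0.
have := ler_wsqrtr h1; rewrite sqrtr_sqr //.
Qed.

Lemma enorm_le_sum (x : vec) : enorm x <= \sum_(i < n) `|x i|.
Proof.
apply: sqrt_le_of; first by apply: sumr_ge0 => i _.
pose P (a b : R) := 0 <= a /\ 0 <= b /\ a <= b ^+ 2.
suff : P (\sum_(i < n) x i ^+ 2) (\sum_(i < n) `|x i|) by case=> _ [_ ?].
apply: (big_ind2 P).
- by rewrite /P; lra.
- move=> a1 b1 a2 b2 [h1 [h2 h3]] [h4 [h5 h6]]; rewrite /P; nra.
- move=> i _; rewrite /P; split; first exact: sqr_ge0.
  by rewrite real_normK ?num_real //; split.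
Qed.

Lemma enorm_scale (t : R) (x : vec) : enorm (fun i => t * x i) = `|t| * enorm x.
Proof.
rewrite /enorm (_ : \sum_(i < n) (t * x i) ^+ 2 = t ^+ 2 * \sum_(i < n) x i ^+ 2).
  by rewrite sqrtrM ?sqr_ge0 // sqrtr_sqr.
by rewrite mulr_sumr; apply: eq_bigr => i _; rewrite exprMn.
Qed.

Lemma enorm_weak_tri (x y : vec) :
  enorm (fun i => x i + y i) <= 2 * (enorm x + enorm y).
Proof.
apply: sqrt_le_of; first by have := enorm_ge0 x; have := enorm_ge0 y; lra.
have h : \sum_(i < n) (x i + y i) ^+ 2 <=
         2 * \sum_(i < n) x i ^+ 2 + 2 * \sum_(i < n) y i ^+ 2.
  rewrite !mulr_sumr -big_split /=; apply: ler_sum => i _; have := sqr_ge0 (x i - y i); nra.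
apply: (le_trans h); rewrite -(enorm_sqr x) -(enorm_sqr y).
have := enorm_ge0 x; have := enorm_ge0 y.
move: (enorm x) (enorm y) => a b ha hb.
have hab : 0 <= a * b by exact: mulr_ge0.
nra.
Qed.

Lemma enorm_opp (x : vec) : enorm (fun i => - x i) = enorm x.
Proof. by rewrite /enorm; congr Num.sqrt; apply: eq_bigr => i _; rewrite sqrrN. Qed.

Lemma enorm0 : enorm (fun _ : 'I_n => 0 : R) = 0.
Proof. by rewrite /enorm big1 ?sqrtr0 // => i _; rewrite expr0n. Qed.

Lemma min_seq (T : eqType) (s : seq T) (E : T -> R) :
  (forall v, v \in s -> 0 < E v) ->
  exists e, 0 < e /\ forall v, v \in s -> e <= E v.
Proof.
elim: s => [|a s IH] H; first by exists 1; split.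
have [e [e0 He]] := IH (fun v hv => H v ltac:(by rewrite in_cons hv orbT)).
have ha := H a (mem_head _ _).
exists (Num.min e (E a)); split; first by rewrite lt_min e0 ha.
move=> v; rewrite in_cons => /orP[/eqP ->|hv]; first by rewrite ge_min lexx orbT.
by rewrite ge_min He.
Qed.

End Enorm.


Section Clarke.
Variables (R : realType) (n : nat) (Iz : {set 'I_n}).
Notation vec := ('I_n -> R).
Variables (h : vec -> R) (L : R) (L0 : 0 <= L) (hL : lipschitz_c Iz L h) (x : vec).

Definition quot (y : vec) (t : R) (s : vec) := (h (vadd y (vscale t s)) - h y) / t.

Definition UB (s : vec) (r : R) := exists2 d : R, 0 < d &
  forall y t, same_z Iz y x -> enorm (vsub y x) < d -> 0 < t -> t < d -> quot y t s <= r.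

Lemma cl_le s r : UB s r -> (clarke_dd Iz h x s <= r%:E)%E.
Proof.
case=> d d0 H; apply: ge_ereal_inf; eexists; first by exists d.
apply: ge_ereal_sup => e [y [t [hz [hy [/andP[t0 td] ->]]]]].
by rewrite lee_fin; apply: H.
Qed.

Lemma cl_lt s r : (clarke_dd Iz h x s < r%:E)%E -> UB s r.
Proof.
case/ereal_inf_lt => e [d d0 <-] hlt; exists d => // y t hz hy t0 td.
rewrite -lee_fin; apply: le_trans (ltW hlt); apply: ereal_sup_ubound.
by exists y, t; do 3 (split => //); rewrite t0 td.
Qed.

Lemma quot_bound y t s : zero_z Iz s -> 0 < t -> `|quot y t s| <= L * enorm s.
Proof.
move=> hs t0; rewrite /quot normrM normfV (gtr0_norm t0) ler_pdivrMr //.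
have hz : same_z Iz (vadd y (vscale t s)) y.
  by move=> i hi; rewrite /vadd /vscale hs // mulr0 addr0.
apply: le_trans (hL hz) _.
have -> : vsub (vadd y (vscale t s)) y = (fun i => t * s i).
  by apply: funext => i; rewrite /vsub /vadd /vscale; ring.
by rewrite enorm_scale (gtr0_norm t0) mulrA mulrAC.
Qed.

Lemma UB_lip s : zero_z Iz s -> UB s (L * enorm s).
Proof.
move=> hs; exists 1 => // y t _ _ t0 _.
exact: le_trans (ler_norm _) (quot_bound y hs t0).
Qed.

Lemma vsub_self : vsub x x = (fun _ => 0).
Proof. by apply: funext => i; rewrite /vsub subrr. Qed.

Lemma cl_lb s : zero_z Iz s -> ((- (L * enorm s))%:E <= clarke_dd Iz h x s)%E.
Proof.
move=> hs; apply: le_ereal_inf_tmp => _ [d /= d0 <-].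
apply: le_ereal_sup_tmp; exists (quot x (d / 2) s)%:E.
  exists x, (d / 2); split; first by [].
  split; first by rewrite vsub_self enorm0.
  split; last by [].
  apply/andP; split; lra.
change ((- (L * enorm s))%:E <= (quot x (d/2) s)%:E)%E.
rewrite lee_fin; have := quot_bound x hs (_ : 0 < d / 2).
rewrite ler_norml => /(_ ltac:(lra)) /andP[] //.
Qed.

Lemma cl_fin s : zero_z Iz s ->
  clarke_dd Iz h x s = (fine (clarke_dd Iz h x s))%:E.
Proof.
move=> hs; have lb := cl_lb hs; have ub := cl_le (UB_lip hs).
by move: lb ub; case: (clarke_dd Iz h x s).
Qed.

Definition proj (v : vec) : vec := fun i => if i \in Iz then 0 else v i.

Lemma proj_z v : zero_z Iz (proj v).
Proof. by move=> i hi; rewrite /proj hi. Qed.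

Lemma proj_id v : zero_z Iz v -> proj v = v.
Proof. by move=> hv; apply: funext => i; rewrite /proj; case: ifP => // /hv ->. Qed.

Definition pc (v : vec) : R := fine (clarke_dd Iz h x (proj v)).

Lemma pc_cl v : clarke_dd Iz h x (proj v) = (pc v)%:E.
Proof. exact: cl_fin (proj_z v). Qed.

Lemma UB_pc v e : 0 < e -> UB (proj v) (pc v + e).
Proof. by move=> e0; apply: cl_lt; rewrite pc_cl lte_fin ltrDl. Qed.

Lemma UB_add v w a b : zero_z Iz v -> zero_z Iz w -> UB v a -> UB w b ->
  UB (fun i => v i + w i) (a + b).
Proof.
move=> hv hw [dv dv0 Hv] [dw dw0 Hw].
have nv0 := enorm_ge0 v.
have k0 : 0 < 4 * (1 + enorm v) by lra.
exists (Num.min dv (dw / (4 * (1 + enorm v)))).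
  by rewrite lt_min dv0 /= divr_gt0.
move=> y t hz hy t0; rewrite lt_min => /andP[tv tw].
move: hy; rewrite lt_min => /andP[hyv hyw].
have q : quot y t (fun i => v i + w i) = quot (vadd y (vscale t v)) t w + quot y t v.
  rewrite /quot.
  have -> : vadd y (vscale t (fun i => v i + w i)) =
            vadd (vadd y (vscale t v)) (vscale t w).
    by apply: funext => i; rewrite /vadd /vscale; ring.
  by rewrite -mulrDl; congr (_ / _); ring.
rewrite q [a + b]addrC; apply: lerD; last by apply: Hv.
have dwk : dw / (4 * (1 + enorm v)) <= dw.
  rewrite ler_pdivrMr //; nra.
apply: Hw => //; last exact: lt_le_trans tw dwk.
- by move=> i hi; rewrite /vadd /vscale hv // mulr0 addr0; apply: hz.
- have -> : vsub (vadd y (vscale t v)) x = (fun i => vsub y x i + t * v i).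
    by apply: funext => i; rewrite /vsub /vadd /vscale; ring.
  apply: le_lt_trans (enorm_weak_tri _ _) _.
  rewrite enorm_scale (gtr0_norm t0).
  move: hyw tw; set D := dw / _ => hyw tw.
  have hD : D * (4 * (1 + enorm v)) = dw by rewrite /D mulfVK // gt_eqF.
  have := enorm_ge0 (vsub y x).
  nra.
Qed.

Lemma UB_scale v a lam : 0 < lam -> UB v a -> UB (fun i => lam * v i) (lam * a).
Proof.
move=> l0 [d d0 H]; exists (Num.min d (d / lam)).
  by rewrite lt_min d0 divr_gt0.
move=> y t hz; rewrite !lt_min => /andP[hy _] t0 /andP[_ tl].
have -> : quot y t (fun i => lam * v i) = lam * quot y (lam * t) v.
  rewrite /quot.
  have -> : vadd y (vscale t (fun i => lam * v i)) = vadd y (vscale (lam * t) v).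
    by apply: funext => i; rewrite /vadd /vscale; ring.
  by field; rewrite ?gt_eqF ?t0 ?l0.
rewrite ler_pM2l //; apply: H => //; first exact: mulr_gt0.
by move: tl; rewrite ltr_pdivlMr // mulrC.
Qed.

Lemma pc_sub v w : pc (fun i => v i + w i) <= pc v + pc w.
Proof.
apply/ler_addgt0Pr => e e0.
have e2 : 0 < e / 2 by lra.
have := UB_add (proj_z v) (proj_z w) (UB_pc v e2) (UB_pc w e2).
have -> : (fun i => proj v i + proj w i) = proj (fun i => v i + w i).
  by apply: funext => i; rewrite /proj; case: ifP => //; rewrite addr0.
move/cl_le; rewrite pc_cl lee_fin; lra.
Qed.

Lemma pc_hom v lam : 0 < lam -> pc (fun i => lam * v i) <= lam * pc v.
Proof.
move=> l0; apply/ler_addgt0Pr => e e0.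
have e2 : 0 < e / lam by exact: divr_gt0.
have := UB_scale l0 (UB_pc v e2).
have -> : (fun i => lam * proj v i) = proj (fun i => lam * v i).
  by apply: funext => i; rewrite /proj; case: ifP => //; rewrite mulr0.
move/cl_le; rewrite pc_cl lee_fin mulrDr mulrCA mulfV ?gt_eqF // mulr1; exact.
Qed.

Lemma pc_zero_z s : zero_z Iz s -> clarke_dd Iz h x s = (pc s)%:E.
Proof. by move=> hs; rewrite -pc_cl proj_id. Qed.

Lemma pc_null v : (forall i, i \notin Iz -> v i = 0) -> pc v = 0.
Proof.
move=> hv.
have e : proj v = (fun _ => 0).
  by apply: funext => i; rewrite /proj; case: ifPn => // /hv.
have := cl_lb (proj_z v); have := cl_le (UB_lip (proj_z v)).
rewrite pc_cl e enorm0 mulr0 oppr0 !lee_fin => a b; apply/eqP; rewrite eq_le a b.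
by [].
Qed.

End Clarke.

Local Open Scope classical_set_scope.



Section HahnB.
Variables (R : realType) (n : nat).
Notation vec := ('I_n -> R).

Definition sublin (p : vec -> R) :=
  (forall v w, p (fun i => v i + w i) <= p v + p w) /\
  (forall lam v, 0 < lam -> p (fun i => lam * v i) <= lam * p v).

Definition transl (p : vec -> R) (w : vec) (a : R) :=
  forall v tau, p (fun i => v i + tau * w i) = p v + tau * a.

Lemma sl0 p : sublin p -> p (fun _ => 0) = 0.
Proof.
case=> _ H.
have h1 := H 2 (fun _ => 0) ltac:(lra).
have h2 := H (1/2) (fun _ => 0) ltac:(lra).
rewrite (_ : (fun _ => _) = (fun _ => 0)) in h1; last by apply: funext => i /=; rewrite mulr0.
rewrite (_ : (fun _ => _) = (fun _ => 0)) in h2; last by apply: funext => i /=; rewrite mulr0.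
lra.
Qed.

Lemma sl_ge p v : sublin p -> - p (fun i => - v i) <= p v.
Proof.
move=> hp.
have h : p (fun i => v i + - v i) <= p v + p (fun i => - v i) := (proj1 hp) v (fun i => - v i).
rewrite (_ : (fun i => v i + - v i) = (fun _ => 0)) in h; last first.
  by apply: funext => i; rewrite subrr.
rewrite sl0 // in h; lra.
Qed.

Lemma sl_homge p v lam : sublin p -> 0 < lam -> lam * p v <= p (fun i => lam * v i).
Proof.
move=> hp l0; have il : 0 < lam^-1 by rewrite invr_gt0.
have h : p (fun i => lam^-1 * (lam * v i)) <= lam^-1 * p (fun i => lam * v i) :=
  (proj2 hp) (lam^-1) (fun i => lam * v i) il.
rewrite (_ : (fun i => lam^-1 * (lam * v i)) = v) in h; last first.
  by apply: funext => i; rewrite mulrA mulVf ?gt_eqF // mul1r.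
by have := ler_wpM2l (ltW l0) h; rewrite mulrA mulfV ?gt_eqF // mul1r.
Qed.

Section Step.
Variables (p : vec -> R) (hp : sublin p) (e : vec) (c : R).
Hypotheses (c1 : - p (fun i => - e i) <= c) (c2 : c <= p e).

Lemma key t : t * c <= p (fun i => t * e i).
Proof.
case: (ltrgtP t 0) => ht.
- have h : (- t) * p (fun i => - e i) <= p (fun i => (- t) * - e i) :=
    sl_homge (fun i => - e i) hp (_ : 0 < - t).
  rewrite (_ : (fun i => (- t) * - e i) = (fun i => t * e i)) in h; last first.
    by apply: funext => i; ring.
  have {}h := h ltac:(lra).
  move: h c1; move: (p (fun i => - e i)) (p (fun i => t * e i)) => P Q h1 h2.
  nra.
- have h : t * p e <= p (fun i => t * e i) := sl_homge e hp ht.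
  move: h c2; move: (p e) (p (fun i => t * e i)) => P Q h1 h2.
  nra.
- rewrite ht mul0r (_ : (fun i => 0 * e i) = (fun _ => 0)) ?sl0 //.
  by apply: funext => i; rewrite mul0r.
Qed.

Definition Sset (v : vec) := [set p (fun i => v i + t * e i) - t * c | t in [set: R]].
Definition qinf (v : vec) := inf (Sset v).

Lemma S_lb v : has_lbound (Sset v).
Proof.
exists (- p (fun i => - v i)) => _ [t _ <-].
have := (proj1 hp) (fun i => v i + t * e i) (fun i => - v i).
rewrite (_ : (fun i => _) = (fun i => t * e i)); last by apply: funext => i /=; ring.
have := key t; lra.
Qed.

Lemma q_le v t : qinf v <= p (fun i => v i + t * e i) - t * c.
Proof. by apply: (ge_inf (S_lb v)); exists t. Qed.

Lemma q_ge v z : (forall t, z <= p (fun i => v i + t * e i) - t * c) -> z <= qinf v.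
Proof.
move=> H; apply: lb_le_inf; first by exists (p (fun i => v i + 0 * e i) - 0 * c), 0.
by move=> _ [t _ <-].
Qed.

Lemma q_le_p v : qinf v <= p v.
Proof.
have := q_le v 0.
rewrite (_ : (fun i => _) = v) ?mul0r ?subr0 //.
by apply: funext => i /=; rewrite mul0r addr0.
Qed.

Lemma q_transl_e : transl qinf e c.
Proof.
move=> v tau; apply/eqP; rewrite eq_le; apply/andP; split.
- rewrite -lerBlDr; apply: q_ge => t.
  have h : qinf (fun i => v i + tau * e i) <=
    p (fun i => v i + tau * e i + (t - tau) * e i) - (t - tau) * c := q_le _ _.
  rewrite (_ : (fun i => v i + tau * e i + (t - tau) * e i) = (fun i => v i + t * e i)) in h.
    lra.
  by apply: funext => i; ring.
- apply: q_ge => t.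
  have h : qinf v <= p (fun i => v i + (tau + t) * e i) - (tau + t) * c := q_le _ _.
  rewrite (_ : (fun i => v i + (tau + t) * e i) = (fun i => (v i + tau * e i) + t * e i)) in h.
    lra.
  by apply: funext => i; ring.
Qed.

Lemma q_transl_pres w a : transl p w a -> transl qinf w a.
Proof.
move=> T v tau; apply/eqP; rewrite eq_le; apply/andP; split.
- rewrite -lerBlDr; apply: q_ge => t.
  have h : qinf (fun i => v i + tau * w i) <=
     p (fun i => v i + tau * w i + t * e i) - t * c := q_le _ _.
  rewrite (_ : (fun i => v i + tau * w i + t * e i) = (fun i => (v i + t * e i) + tau * w i)) in h.
    rewrite T in h; lra.
  by apply: funext => i; ring.
- apply: q_ge => t.
  have h : qinf v <= p (fun i => v i + t * e i) - t * c := q_le _ _.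
  rewrite (_ : (fun i => (v i + tau * w i) + t * e i) = (fun i => (v i + t * e i) + tau * w i)); last first.
    by apply: funext => i; ring.
  rewrite T; lra.
Qed.

Lemma q_sublin : sublin qinf.
Proof.
split.
- move=> v w; rewrite -lerBlDr; apply: q_ge => t1.
  rewrite lerBlDr -lerBlDl; apply: q_ge => t2.
  have h1 : qinf (fun i => v i + w i) <=
     p (fun i => v i + w i + (t1 + t2) * e i) - (t1 + t2) * c := q_le _ _.
  have h2 : p (fun i => (v i + t1 * e i) + (w i + t2 * e i)) <=
     p (fun i => v i + t1 * e i) + p (fun i => w i + t2 * e i) := (proj1 hp) _ _.
  rewrite (_ : (fun i => (v i + t1 * e i) + (w i + t2 * e i)) =
      (fun i => (v i + w i) + (t1 + t2) * e i)) in h2; last first.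
    by apply: funext => i; ring.
  lra.
- move=> lam v l0; rewrite mulrC -ler_pdivrMr //; apply: q_ge => t.
  rewrite ler_pdivrMr // [_ * lam]mulrC.
  have h1 : qinf (fun i => lam * v i) <=
     p (fun i => lam * v i + (lam * t) * e i) - (lam * t) * c := q_le _ _.
  have h2 : p (fun i => lam * (v i + t * e i)) <= lam * p (fun i => v i + t * e i) :=
     (proj2 hp) lam _ l0.
  rewrite (_ : (fun i => lam * (v i + t * e i)) = (fun i => lam * v i + lam * t * e i)) in h2; last first.
    by apply: funext => i; ring.
  move: h1 h2; move: (p (fun i => v i + t * e i)) (p (fun i => lam * v i + lam * t * e i)) => P Q h1 h2.
  nra.
Qed.

End Step.

Definition basis (j : 'I_n) : vec := fun i => (i == j)%:R.

Lemma HB_iter p : sublin p -> forall k : nat, exists qinf : vec -> R,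
  [/\ sublin qinf, (forall v, qinf v <= p v),
      (forall j : 'I_n, (j < k)%N -> exists c, transl qinf (basis j) c) &
      (forall w a, transl p w a -> transl qinf w a)].
Proof.
move=> hp; elim=> [|k [q0 [h1 h2 h3 h4]]].
  by exists p; split.
case: (ltnP k n) => hk; last first.
  exists q0; split => // j hj; apply: h3; exact: leq_trans (ltn_ord j) hk.
pose e := basis (Ordinal hk).
have c1 := sl_ge e h1.
exists (qinf q0 e (q0 e)); split.
- exact: q_sublin.
- by move=> v; apply: le_trans (q_le_p _ _ _ _) (h2 v).
- move=> j; rewrite ltnS leq_eqVlt => /orP[/eqP ej|jk].
    exists (q0 e); rewrite (_ : basis j = e); first exact: q_transl_e.
    by rewrite /e; congr basis; apply: val_inj.
  have [c hc] := h3 j jk; exists c; exact: q_transl_pres.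
- by move=> w a /h4; apply: q_transl_pres.
Qed.

Lemma HB_final p s : sublin p -> exists xi : vec,
  (forall v, \sum_(i < n) v i * xi i <= p v) /\ \sum_(i < n) s i * xi i = p s /\
  (forall j, xi j <= p (basis j) /\ - xi j <= p (fun i => - basis j i)).
Proof.
move=> hp.
have c1 := sl_ge s hp.
set q0 := qinf p s (p s).
have hq0 := q_sublin hp c1 (lexx _).
have [qq [h1 h2 h3 h4]] := HB_iter hq0 n.
have ts : transl qq s (p s) by apply: h4; exact: q_transl_e.
have le_p v : qq v <= p v by apply: le_trans (h2 v) (q_le_p hp c1 (lexx _) v).
have z0 := sl0 h1.
have tb j : transl qq (basis j) (qq (basis j)).
  have [c hc] := h3 j (ltn_ord j).
  have := hc (fun _ => 0) 1.
  rewrite z0 add0r mul1r (_ : (fun i => _) = basis j) => [cE|]; last first.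
    by apply: funext => i /=; rewrite add0r mul1r.
  by rewrite cE.
have lin : forall (r : seq 'I_n) v,
    qq (fun i => \sum_(j <- r) v j * basis j i) = \sum_(j <- r) v j * qq (basis j).
  move=> r v; elim: r => [|j r IH].
    rewrite big_nil (_ : (fun i => _) = (fun _ => 0)) //.
    by apply: funext => i /=; rewrite big_nil.
  rewrite big_cons -IH [RHS]addrC -(tb j); congr qq; apply: funext => i /=.
  by rewrite big_cons addrC.
have vE v : (fun i => \sum_(j <- index_enum 'I_n) v j * basis j i) = v.
  apply: funext => i /=; rewrite (bigD1 i) //= /basis eqxx mulr1 big1 ?addr0 //.
  by move=> j; rewrite eq_sym => /negbTE ->; rewrite mulr0.
have linv v : qq v = \sum_(i < n) v i * qq (basis i).
  by have := lin (index_enum 'I_n) v; rewrite vE.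
exists (fun j => qq (basis j)); split; last split.
- by move=> v; rewrite -linv.
- rewrite -linv.
  have := ts (fun _ => 0) 1; rewrite z0 add0r mul1r => <-.
  by congr qq; apply: funext => i /=; rewrite add0r mul1r.
- move=> j; split; first exact: le_p.
  apply: le_trans (le_p _).
  have := tb j (fun _ => 0) (-1).
  rewrite z0 add0r (_ : (fun i => 0 + -1 * basis j i) = (fun i => - basis j i)); last first.
    by apply: funext => i /=; ring.
  by move=> ->; rewrite mulN1r.
Qed.

End HahnB.

Local Close Scope classical_set_scope.


Section NoSub.
Variables (R : realType) (n : nat) (Iz : {set 'I_n}).
Notation vec := ('I_n -> R).

Lemma no_subgrad (h : vec -> R) L (hL : lipschitz_c Iz L h) x s :
  zero_z Iz s -> ~ (clarke_dd Iz h x s < 0%:E)%E ->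
  exists xi, in_clarke_subdiff Iz h x xi /\ 0 <= dotp xi s.
Proof.
move=> hs hn.
have sl : sublin (pc Iz h x).
  split; [exact: pc_sub hL x | move=> lam v l0; have := pc_hom hL x v l0; exact].
have [xi [H1 [H2 H3]]] := HB_final s sl.
have xz : zero_z Iz xi.
  move=> j hj; have [a b] := H3 j.
  rewrite (pc_null hL) in a; last first.
    move=> i hi; have ij : (i == j) = false by apply/negbTE; apply: contraNneq hi => ->.
    by rewrite /basis ij.
  rewrite (pc_null hL) in b; last first.
    move=> i hi; have ij : (i == j) = false by apply/negbTE; apply: contraNneq hi => ->.
    by rewrite /basis ij oppr0.
  apply/eqP; rewrite eq_le a /=; lra.
exists xi; split; first split => //.
- move=> s' hs'; rewrite (pc_zero_z hL x hs') lee_fin; exact: H1.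
- have e : dotp xi s = pc Iz h x s.
    by rewrite -H2 /dotp; apply: eq_bigr => i _; rewrite mulrC.
  rewrite e; move: hn; rewrite (pc_zero_z hL x hs) lte_fin; case: ltP => //.
Qed.

End NoSub.


Section Local.
Variables (R : realType) (n m : nat) (Iz : {set 'I_n}).
Notation vec := ('I_n -> R).
Variables (l u : vec) (f : vec -> R) (g : 'I_m -> vec -> R) (L : R).
Hypotheses (L0 : 0 < L) (hf : lipschitz_c Iz L f) (hg : forall i, lipschitz_c Iz L (g i)).

Lemma max0_lip (a b : R) : `|Num.max 0 a - Num.max 0 b| <= `|a - b|.
Proof.
rewrite !maxEle; case: ifP => ha; case: ifP => hb.
- exact: lexx.
- have hb' : b < 0 by rewrite ltNge hb.
  rewrite subr0 !ger0_norm //; lra.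
- have ha' : a < 0 by rewrite ltNge ha.
  rewrite sub0r normrN (ger0_norm hb) ltr0_norm; lra.
- by rewrite subrr normr0.
Qed.

Lemma max0_mono (a b : R) : a <= b -> Num.max 0 a <= Num.max 0 b.
Proof. by move=> ab; rewrite ge_max !le_max lexx ab orbT. Qed.

Lemma enorm_vsubC (a b : vec) : enorm (vsub a b) = enorm (vsub b a).
Proof.
rewrite -enorm_opp; congr enorm; apply: funext => i; rewrite /vsub; ring.
Qed.

Lemma viol_lip (a b : vec) : same_z Iz a b ->
  `|viol g a - viol g b| <= m%:R * L * enorm (vsub a b).
Proof.
move=> hab; rewrite /viol -sumrB.
apply: le_trans (ler_norm_sum _ _ _) _.
apply: le_trans (_ : _ <= \sum_(i < m) L * enorm (vsub a b)) _.
  apply: ler_sum => i _; apply: le_trans (max0_lip _ _) _; exact: hg.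
by rewrite sumr_const card_ord -mulrA mulr_natl.
Qed.

Lemma int_same (y c : vec) : inZ Iz y -> inZ Iz c -> enorm (vsub y c) < 1 -> same_z Iz y c.
Proof.
move=> hy hc hn i hi; have [a ea] := hy i hi; have [b eb] := hc i hi.
have h := le_lt_trans (coord_le_enorm (vsub y c) i) hn.
rewrite /vsub ea eb -intrB -intr_norm ltrz1 in h.
rewrite ea eb; congr intmul; lia.
Qed.

Definition Qp (e : R) (y : vec) := forall eps, 0 < eps -> eps <= e -> inZ Iz y -> ~ inF g y ->
  ~ clarke_stationary Iz l u (penalty f g eps) y.

Definition LocP (c : vec) := exists r, 0 < r /\ exists e, 0 < e /\
      forall y, inX l u y -> enorm (vsub y c) < r -> Qp e y.

Lemma case_notZ c : ~ inZ Iz c -> LocP c.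
Proof.
move/existsNP => [i /not_implyP [hi hni]].
pose k := Num.floor (c i).
have [k1 k2] : k%:~R <= c i /\ c i < (k + 1)%:~R.
  by have /andP[] := floor_itv (c i).
have k1' : k%:~R < c i.
  rewrite lt_neqAle k1 andbT; apply/eqP => e; apply: hni; by exists k.
exists (Num.min (c i - k%:~R) ((k + 1)%:~R - c i)); split.
  by rewrite lt_min !subr_gt0 k1' k2.
exists 1; split => // y _ hy eps _ _ hz _ _.
have [j ej] := hz i hi.
have h := le_lt_trans (coord_le_enorm (vsub y c) i) hy.
rewrite /vsub lt_min !ltr_norml in h.
case/andP: h => /andP[h1 h2] /andP[h3 h4].
have a1 : k%:~R < (j%:~R : R) by rewrite -ej; lra.
have a2 : (j%:~R : R) < (k + 1)%:~R by rewrite -ej; lra.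
rewrite ltr_int in a1; rewrite ltr_int in a2; lia.
Qed.

Lemma case_int c : in_intF g c -> LocP c.
Proof.
case=> r [r0 H]; exists r; split => //; exists 1; split => // y _ hy eps _ _ _ hF _.
exact: hF (H y hy).
Qed.

Lemma case_ii c : inX l u c -> inZ Iz c ->
  (exists d, inDz Iz l u c d /\ viol g (fun i => c i + (d i)%:~R) < viol g c) -> LocP c.
Proof.
move=> Xc Zc [d [[dz [dg [dX dZ]]] dv]].
set cd := (fun i => c i + (d i)%:~R) in dX dZ dv.
set D := viol g c - viol g cd.
have D0 : 0 < D by rewrite subr_gt0.
pose M : R := `|f cd - f c|.
have M0 : 0 <= M by exact: normr_ge0.
set K := (m%:R + 1) * L.
have K0 : 0 < K by apply: mulr_gt0 => //; apply: ltr_pwDr.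
have K4 : 0 < 4 * K by lra.
have mK : m%:R * L <= K by rewrite /K mulrDl mul1r lerDl; exact: ltW.
exists (Num.min 1 (D / (4 * K))); split.
  by rewrite lt_min ltr01 divr_gt0.
have N0 : 0 < 4 * (M + 2 * L + 1).
  move: M0 L0; move: M L => M1 L1 hM hL1. lra.

exists (D / (4 * (M + 2 * L + 1))); split; first by rewrite divr_gt0.
move=> y Xy; rewrite lt_min => /andP[hy1 hy2] eps eps0 epse Zy _ [_ [_ [_ Hb]]].
have sz := int_same Zy Zc hy1.
pose yd := fun i => y i + (d i)%:~R.
have hB : inBz Iz l u y yd.
  exists d; split => //; split => //; split => //; split.
  - move=> i; case: (boolP (i \in Iz)) => hi.
      by rewrite /yd (sz i hi); exact: dX i.
    by rewrite /yd dz // addr0; exact: Xy i.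
  - by move=> i hi; rewrite /yd (sz i hi); exact: dZ i hi.
have Hp := Hb yd hB; rewrite /penalty in Hp.
set E := enorm (vsub y c) in hy1 hy2.
have E0 : 0 <= E := enorm_ge0 _.
have eE : enorm (vsub yd cd) = E.
  by rewrite /E; congr enorm; apply: funext => i; rewrite /vsub /yd /cd; ring.
have szd : same_z Iz yd cd by move=> i hi; rewrite /yd /cd sz.
have v1 := viol_lip sz; have v2 := viol_lip szd; rewrite eE in v2.
have f1 := hf sz; have f2 := hf szd; rewrite eE -/E in f2.
rewrite -/E in v1 f1.
have hmle : m%:R * L * E <= D / 4.
  apply: le_trans (_ : K * E <= _).
    by apply: ler_wpM2r.
  move: hy2; rewrite ltr_pdivlMr // => hy2.
  rewrite ler_pdivlMr //; lra.
have h1 : viol g y - viol g yd <= eps * (f yd - f y).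
  have := ler_wpM2l (ltW eps0) Hp.
  rewrite !mulrDr !mulrA mulfV ?gt_eqF // !mul1r; lra.
have h2 : f yd - f y <= M + 2 * L + 1.
  move: f1 f2; rewrite !ler_norml => /andP[a1 a2] /andP[b1 b2].
  have : f cd - f c <= M by exact: ler_norm.
  have : L * E <= L by rewrite -{2}(mulr1 L) ler_pM2l //; lra.
  lra.
have h3 : eps * (f yd - f y) <= D / 4.
  have := ler_wpM2l (ltW eps0) h2.
  have : eps * (M + 2 * L + 1) <= D / 4.
    move: epse; rewrite ler_pdivlMr // => epse; lra.
  lra.
move: v1 v2; rewrite !ler_norml => /andP[a1 a2] /andP[b1 b2].
have hD : D = viol g c - viol g cd by [].
clearbody D.
move: a1 a2 b1 b2 hD h1 h3 hmle D0; clear -L0.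
move: (m%:R * L * E) (eps * (f yd - f y)) (viol g y) (viol g yd) (viol g c) (viol g cd) D.
move=> P Q A B C F G; lra.
Qed.

End Local.


Lemma fin_ar (R : realFieldType) (A B C D : R) :
  A <= D -> B <= - C -> 2 * (D + 1) <= C -> 0 <= D -> A + B <= -1.
Proof. lra. Qed.

Section CaseI.
Variables (R : realType) (n m : nat) (Iz : {set 'I_n}).
Notation vec := ('I_n -> R).
Variables (l u : vec) (f : vec -> R) (g : 'I_m -> vec -> R) (L : R).
Hypotheses (L0 : 0 < L) (hf : lipschitz_c Iz L f) (hg : forall i, lipschitz_c Iz L (g i)).

Lemma tri3 (a b c : vec) : enorm (vsub a c) <= 2 * (enorm (vsub a b) + enorm (vsub b c)).
Proof.
have -> : vsub a c = (fun i => vsub a b i + vsub b c i).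
  by apply: funext => i; rewrite /vsub; ring.
exact: enorm_weak_tri.
Qed.

Lemma enorm_step (y : vec) t s : 0 <= t -> enorm (vsub (vadd y (vscale t s)) y) = t * enorm s.
Proof.
move=> t0; have -> : vsub (vadd y (vscale t s)) y = (fun i => t * s i).
  by apply: funext => i; rewrite /vsub /vadd /vscale; ring.
by rewrite enorm_scale ger0_norm.
Qed.

Lemma same_z_trans (a b c : vec) : same_z Iz a b -> same_z Iz b c -> same_z Iz a c.
Proof. by move=> h1 h2 i hi; rewrite h1 // h2. Qed.

Lemma same_z_step (y : vec) t s : zero_z Iz s -> same_z Iz (vadd y (vscale t s)) y.
Proof. by move=> hs i hi; rewrite /vadd /vscale hs // mulr0 addr0. Qed.

Lemma lip_lower (h : vec -> R) (a b : vec) : lipschitz_c Iz L h -> same_z Iz a b ->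
  h b - L * enorm (vsub a b) <= h a.
Proof.
move=> hl hab; have := hl _ _ hab; rewrite ler_norml => /andP[h1 h2]; lra.
Qed.

Lemma lip_upper (h : vec -> R) (a b : vec) : lipschitz_c Iz L h -> same_z Iz a b ->
  h a <= h b + L * enorm (vsub a b).
Proof.
move=> hl hab; have := hl _ _ hab; rewrite ler_norml => /andP[h1 h2]; lra.
Qed.

Lemma case_i_data c (s : vec) : zero_z Iz s ->
  (forall i, 0 <= g i c -> forall xi, in_clarke_subdiff Iz (g i) c xi -> dotp xi s < 0) ->
  forall i, exists pr : R * R, 0 < pr.1 /\ 0 < pr.2 /\
    (0 <= g i c -> forall y t, same_z Iz y c -> enorm (vsub y c) < pr.1 -> 0 < t -> t < pr.1 ->
        quot (g i) y t s <= - pr.2) /\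
    (g i c < 0 -> forall y, same_z Iz y c -> enorm (vsub y c) < pr.1 -> g i y < 0).
Proof.
move=> hs Hs i; case: (leP 0 (g i c)) => gi.
- have neg : (clarke_dd Iz (g i) c s < 0%:E)%E.
    apply/negPn/negP => /negP hn.
    have [xi [xs xp]] := no_subgrad (hg i) hs hn.
    by have := Hs i gi xi xs; rewrite ltNge xp.
  move: neg; rewrite (pc_zero_z (hg i) c hs) lte_fin => neg.
  have : (clarke_dd Iz (g i) c s < (pc Iz (g i) c s / 2)%:E)%E.
    by rewrite (pc_zero_z (hg i) c hs) lte_fin; lra.
  case/cl_lt => d d0 H.
  exists (d, - (pc Iz (g i) c s / 2)); split => //; split; first by rewrite /=; lra.
  split; last by move=> /=; lra.
  by move=> _ y t hz hy t0 td; rewrite /= opprK; apply: H.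
- exists (- g i c / L, 1); split; first by rewrite /= divr_gt0 //; lra.
  split => //; split; first by move=> /=; lra.
  move=> _ y hz hy /=.
  have := lip_upper (hg i) hz.
  move: hy; rewrite ltr_pdivlMr // => hy; lra.
Qed.

Lemma case_i c : inX l u c -> inZ Iz c ->
  (exists s, inDc Iz l u c s /\ forall i, 0 <= g i c -> forall xi,
     in_clarke_subdiff Iz (g i) c xi -> dotp xi s < 0) -> LocP Iz l u f g c.
Proof.
move=> Xc Zc [s [[sz [sl su]] Hs]].
have [pr Hpr] := choice (case_i_data sz Hs).
have [dl [dl0 Hdl]] := @min_seq _ _ (enum 'I_m) (fun i => (pr i).1)
  (fun i _ => proj1 (Hpr i)).
have [kp [kp0 Hkp]] := @min_seq _ _ (enum 'I_m) (fun i => (pr i).2)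
  (fun i _ => proj1 (proj2 (Hpr i))).
pose rho j := Num.min (if c j == l j then 1 else c j - l j) (if c j == u j then 1 else u j - c j).
have rho0 j : 0 < rho j.
  have /andP[a b] := Xc j.
  rewrite /rho lt_min; apply/andP; split.
  - case: eqP => e; first exact: ltr01.
    rewrite subr_gt0 lt_neqAle a andbT; apply/eqP => e'; apply: e; by rewrite e'.
  - case: eqP => e; first exact: ltr01.
    rewrite subr_gt0 lt_neqAle b andbT; exact/eqP.
have [rh [rh0 Hrh]] := @min_seq _ _ (enum 'I_n) rho (fun j _ => rho0 j).
pose Dl := Num.min 1 (Num.min dl rh).
have Dl0 : 0 < Dl by rewrite !lt_min ltr01 dl0 rh0.
have Dl1 : Dl <= 1 by rewrite ge_min lexx.
have Dld i : Dl <= (pr i).1.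
  by rewrite !ge_min (Hdl i) ?mem_enum ?orbT.
have Dlr j : Dl <= rho j.
  by rewrite !ge_min (Hrh j) ?mem_enum ?orbT.
have ns0 := enorm_ge0 s.
exists (Dl / 16); split; first by rewrite divr_gt0.
exists (kp / (2 * (L * enorm s + 1))); split.
  have Ls0 : 0 <= L * enorm s := mulr_ge0 (ltW L0) ns0.
  by rewrite divr_gt0 //; lra.
move=> y Xy hy eps eps0 epse Zy nF [_ [_ [Hst _]]].
have Ls0 : 0 <= L * enorm s := mulr_ge0 (ltW L0) ns0.
have hy1 : enorm (vsub y c) < 1 by lra.
have szc := int_same L0 Zy Zc hy1.
have hcoord j : `|y j - c j| < rho j.
  apply: le_lt_trans (coord_le_enorm (vsub y c) j) _.
  by have := Dlr j; lra.
have sDc : inDc Iz l u y s.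
  split => //; split.
  - move=> j hj ylj; apply: sl => //; apply/eqP; apply/negPn/negP => ne.
    have := hcoord j; have := Xc j; rewrite /rho ylj (negbTE ne) => /andP[a _].
    rewrite distrC ger0_norm ?subr_ge0 // lt_min => /andP[+ _]; lra.
  - move=> j hj yuj; apply: su => //; apply/eqP; apply/negPn/negP => ne.
    have := hcoord j; have := Xc j; rewrite /rho yuj (negbTE ne) => /andP[_ b].
    rewrite ger0_norm ?subr_ge0 // lt_min => /andP[_]; lra.
have Hcl := Hst s sDc.
have [j gj] : exists j, 0 < g j y.
  move/existsNP: nF => [j hj]; exists j; rewrite ltNge; apply/negP => hh; exact: hj hh.
have [pj1 [pj2 [Aj Ij]]] := Hpr j.
have jact : 0 <= g j c.
  rewrite leNgt; apply/negP => hneg.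
  have := Ij hneg y szc; have := Dld j; move=> dj /(_ ltac:(lra)); lra.
suff UBP : UB Iz (penalty f g eps) y s (-1).
  by have := le_trans Hcl (cl_le UBP); rewrite lee_fin; lra.
have r0 : 0 < Dl / 16 by rewrite divr_gt0.
have hr : 16 * (Dl / 16) = Dl by rewrite mulrC divfK.
move: hy r0 hr; move: (Dl / 16) => r hy r0 hr.
pose G := g j y.
have s1 : 0 < 1 + enorm s by lra.
pose sig := G / (4 * L * (1 + enorm s)).
have G0 : 0 < G := gj.
have K0 : 0 < 4 * L * (1 + enorm s) by apply: mulr_gt0 => //; apply: mulr_gt0 => //; lra.
have sig0 : 0 < sig by rewrite divr_gt0.
have sigG : 4 * L * (1 + enorm s) * sig = G.
  by rewrite /sig mulrC mulfVK // gt_eqF.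
exists (Num.min (r / (1 + enorm s)) sig).
  by rewrite lt_min divr_gt0 // sig0.
move=> y' t hz hy' t0; rewrite !lt_min => /andP[t1 t2].
move: hy'; rewrite lt_min => /andP[e1 e1s].
move: t1 e1; rewrite !ltr_pdivlMr // => t1 e1.
pose z := vadd y' (vscale t s).
have hzc : same_z Iz y' c := same_z_trans hz szc.
have hzy : same_z Iz z y' := same_z_step y' t sz.
have hzz : same_z Iz z c := same_z_trans hzy hzc.
have hzy' : same_z Iz z y := same_z_trans hzy hz.
have E1 := enorm_ge0 (vsub y' y).
have E2 := enorm_ge0 (vsub y c).
have et : enorm (vsub z y') = t * enorm s := enorm_step y' s (ltW t0).
have ets : t * enorm s < r by nra.
have e2 : enorm (vsub y' c) < 4 * r.
  have := tri3 y' y c; nra.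
have e3 : enorm (vsub z c) < 10 * r.
  have := tri3 z y' c; rewrite et; nra.
have e4 : L * enorm (vsub z y) < G / 2.
  have := tri3 z y' y; rewrite et => h.
  have : enorm (vsub z y) < 2 * sig * (1 + enorm s) by nra.
  move=> h2.
  have h3 : L * enorm (vsub z y) < L * (2 * sig * (1 + enorm s)) by rewrite ltr_pM2l.
  move: h3 sigG; move: (L * enorm (vsub z y)) => X h3 sigG.
  clear -h3 sigG; nra.
have gy' : 0 < g j y'.
  have := lip_lower (hg j) hz; rewrite -/G.
  have : L * enorm (vsub y' y) < L * sig by rewrite ltr_pM2l.
  have : L * sig * (4 * (1 + enorm s)) = G by rewrite -sigG; ring.
  nra.
have gz : 0 < g j z by have := lip_lower (hg j) hzy'; rewrite -/G; lra.
pose T i := Num.max 0 (g i z) - Num.max 0 (g i y').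
have e2D : enorm (vsub y' c) < Dl by lra.
have tD : t < Dl by nra.
have Tle i : T i <= 0.
  case: (leP 0 (g i c)) => ac.
  - have := (proj1 (proj2 (proj2 (Hpr i)))) ac y' t hzc.
    have := Dld i => di.
    move=> /(_ ltac:(lra) t0 ltac:(lra)).
    rewrite /quot -/z ler_pdivrMr // => hq.
    have hp2 := proj1 (proj2 (Hpr i)).
    have : g i z <= g i y' by nra.
    by move/max0_mono; rewrite /T subr_le0.
  - have ni := (proj2 (proj2 (proj2 (Hpr i)))) ac.
    have := Dld i => di.
    have a1 := ni y' hzc ltac:(lra).
    have a2 := ni z hzz ltac:(lra).
    by rewrite /T !maxEle (lt_geF a1) (lt_geF a2) /= subrr.
have Tj : T j <= - kp * t.
  have := Aj jact y' t hzc ltac:(have := Dld j; lra) t0 ltac:(have := Dld j; lra).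
  rewrite /quot -/z ler_pdivrMr // => hq.
  have := Hkp j (mem_enum _ _) => hk.
  rewrite /T !maxEle (ltW gy') (ltW gz) /=.
  apply: le_trans hq _; rewrite !mulNr lerN2 ler_pM2r //.
have hsum : viol g z - viol g y' <= - kp * t.
  rewrite /viol -sumrB (bigD1 j) //=.
  have : \sum_(i < m | i != j) (Num.max 0 (g i z) - Num.max 0 (g i y')) <= 0.
    by apply: sumr_le0 => i _; exact: Tle.
  rewrite -/(T j) in Tj *; move: Tj; rewrite /T; lra.
have qf : quot f y' t s <= L * enorm s.
  by have := quot_bound hf y' sz t0; rewrite ler_norml => /andP[].
have qP : quot (penalty f g eps) y' t s = quot f y' t s + eps^-1 * ((viol g z - viol g y') / t).
  by rewrite /quot /penalty -/z; ring.
have hv : (viol g z - viol g y') / t <= - kp by rewrite ler_pdivrMr.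
have ei : 2 * (L * enorm s + 1) <= eps^-1 * kp.
  move: epse; rewrite ler_pdivlMr; last by lra.
  by move=> h; rewrite [eps^-1 * kp]mulrC ler_pdivlMr // mulrC.
have hv2 : eps^-1 * ((viol g z - viol g y') / t) <= eps^-1 * (- kp).
  by rewrite ler_pM2l // invr_gt0.
rewrite mulrN in hv2; rewrite qP; move: qf hv2 ei Ls0.
move: (quot f y' t s) (eps^-1 * ((viol g z - viol g y') / t)) (eps^-1 * kp) (L * enorm s).
move=> A B C D h1 h2 h3 h4; exact: fin_ar h1 h2 h3 h4.
Qed.

End CaseI.

From mathcomp Require Import finmap topology normedtype.
Import numFieldTopology.Exports numFieldNormedType.Exports.
Local Open Scope classical_set_scope.



Section Comp.
Variables (R : realType) (n : nat).
Notation vec := ('I_n -> R).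

Lemma L2G (l u : vec) (Q : R -> vec -> Prop) :
  (forall e e' y, 0 < e' -> e' <= e -> Q e y -> Q e' y) ->
  (forall c, inX l u c -> exists r, 0 < r /\ exists e, 0 < e /\
      forall y, inX l u y -> enorm (vsub y c) < r -> Q e y) ->
  exists e, 0 < e /\ forall y, inX l u y -> Q e y.
Proof.
move=> Qmon Hloc.
pose A := [set v : 'rV[R]_n | forall i, `[l i, u i] (v ord0 i)].
have Acomp : compact A.
  by apply: (@rV_compact _ _ (fun i => `[l i, u i])) => i; exact: segment_compact.
pose cv (v : 'rV[R]_n) : vec := fun i => v ord0 i.
have inXA v : A v -> inX l u (cv v).
  move=> Av i; have := Av i; rewrite /= in_itv /=; by [].
have : forall v, exists pr : R * R, A v -> 0 < pr.1 /\ 0 < pr.2 /\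
   forall y, inX l u y -> enorm (vsub y (cv v)) < pr.1 -> Q pr.2 y.
  move=> v; case: (pselect (A v)) => Av; last by exists (1, 1).
  have [r [r0 [e [e0 H]]]] := Hloc _ (inXA v Av).
  by exists (r, e).
case/choice => pr Hpr.
pose N : R := n.+1%:R.
have N0 : 0 < N by rewrite ltr0n.
pose f (v : 'rV[R]_n) := ball v ((pr v).1 / N).
have cov : A `<=` cover A f.
  move=> v Av; exists v => //; apply: ballxx.
  by have [? _] := Hpr v Av; exact: divr_gt0.
move: Acomp; rewrite compact_cover => /(_ _ A f (fun i _ => ball_open _ _) cov).
case=> D' sub cov'.
have [e [e0 He]] := @min_seq _ _ (enum_fset D') (fun v => (pr v).2)
  (fun v hv => proj1 (proj2 (Hpr v (set_mem (sub v hv))))).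
exists e; split => // y Xy.
pose ry : 'rV[R]_n := \row_i y i.
have Ary : A ry.
  move=> i; rewrite /ry mxE /= in_itv /=; exact: Xy i.
have [v Dv fv] := cov' ry Ary.
have Av := set_mem (sub v Dv).
have [r0 [e0v Hv]] := Hpr v Av.
apply: (Qmon _ _ _ e0 (He v Dv)); apply: Hv => //.
move: fv; rewrite /f /ball /= => -[_ Hb].
have hi i : `|vsub y (cv v) i| <= (pr v).1 / N.
  have := Hb ord0 i; rewrite /ball /= /ry mxE /vsub /cv distrC => /ltW //.
apply: le_lt_trans (enorm_le_sum _) _.
apply: le_lt_trans (ler_sum _ (fun i _ => hi i)) _.
rewrite sumr_const card_ord -mulr_natr /N mulrAC ltr_pdivrMr // ltr_pM2l //.
by rewrite ltr_nat.
Qed.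
End Comp.

Local Close Scope classical_set_scope.

Theorem mainTheorem6 (R : realType) (n m : nat) (Iz : {set 'I_n})
    (l u : 'I_n -> R)
    (hlu : forall i, l i < u i)
    (hlz : forall i, i \in Iz -> is_intR (l i))
    (huz : forall i, i \in Iz -> is_intR (u i))
    (f : ('I_n -> R) -> R) (g : 'I_m -> ('I_n -> R) -> R)
    (hLip : exists L : R, 0 < L /\ lipschitz_c Iz L f /\
                          forall i, lipschitz_c Iz L (g i))
    (hEMFCQ : EMFCQ Iz l u g) :
  exists eps_star : R, 0 < eps_star /\
    forall eps : R, 0 < eps -> eps <= eps_star ->
      forall x : 'I_n -> R, inX l u x -> inZ Iz x -> ~ inF g x ->
        ~ clarke_stationary Iz l u (penalty f g eps) x.
Proof.
case: hLip => L [L0 [hf hg]].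
have loc : forall c, inX l u c -> LocP Iz l u f g c.
  move=> c Xc; case: (pselect (inZ Iz c)) => Zc; last exact: (case_notZ l u f g L0 Zc).
  case: (pselect (in_intF g c)) => Ic; first exact: case_int.
  case: (hEMFCQ c Xc Zc Ic) => H.
  - exact: (case_i L0 hf hg Xc Zc H).
  - exact: (case_ii L0 hf hg Xc Zc H).
have mono : forall e e' y, 0 < e' -> e' <= e -> Qp Iz l u f g e y -> Qp Iz l u f g e' y.
  move=> e e' y e0 ee H eps eps0 epse; apply: H => //; exact: le_trans epse ee.
have [e [e0 H]] := L2G mono loc.
exists e; split => // eps eps0 epse x Xx Zx nF.
exact: H x Xx eps eps0 epse Zx nF.
Qed.
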